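(* Let $n\in\mathbb{N}$. Then $\operatorname{Cong}(\Phi_n(t)) = 1$ if $n$ is square-free, and $\operatorname{Cong}(\Phi_n(t)) = 0$ if $n$ is not square-free. Moreover, $\operatorname{Cong}(\Psi_n(t)) = 0$ if and only if $n$ is composite.
   Context: $\Phi_n(t)$ is the $n$-th cyclotomic polynomial and $\Psi_n(t) := 1+t+\cdots+t^{n-1} = (t^n-1)/(t-1)$. For $r(t)=\sum_ia_it^i\in\mathbb{Z}[t]$ and integers $u>j\ge0$, $r_{u,j}(t):=\sum_{i\equiv j\bmod u}a_it^i$; $\operatorname{Cong}(r(t))$ is the non-negative generator of the ideal $\mathbb{Z}\cap\bigcap_{1<u\le\deg(r(t))+1}\big(r_{u,0}(t)\mathbb{Z}[t]+\cdots+r_{u,u-1}(t)\mathbb{Z}[t]\big)$. *)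

(* Defs.v *)
From HB Require Import structures.
From mathcomp Require Import all_boot all_order all_algebra all_field.
Set Implicit Arguments. Unset Strict Implicit. Unset Printing Implicit Defensive.
Import Order.TTheory GRing.Theory Num.Theory.
Local Open Scope ring_scope.

Definition Psi (n : nat) : {poly int} := \sum_(i < n) 'X^i.

Definition rpart (r : {poly int}) (u j : nat) : {poly int} :=
  \poly_(i < size r) (if (i %% u == j)%N then r`_i else 0).

Definition in_part_ideal (r : {poly int}) (u : nat) (m : int) : Prop :=
  exists q : 'I_u -> {poly int}, \sum_(j < u) q j * rpart r u j = m%:P.

(* Cong(r) = c : c >= 0 generates Z ∩ ⋂_{1<u<=deg r + 1} (ideal); note
   deg r + 1 = size r for r <> 0. *)
Definition is_Cong (r : {poly int}) (c : int) : Prop :=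
  0 <= c /\
  forall m : int,
    (forall u : nat, (1 < u)%N -> (u <= size r)%N -> in_part_ideal r u m)
    <-> (c %| m)%Z.

Definition squarefree (n : nat) : Prop :=
  forall p : nat, prime p -> ~~ (p ^ 2 %| n)%N.

Definition composite (n : nat) : Prop := (1 < n)%N /\ ~~ prime n.

(* Main.v *)
Require Import Defs.
From HB Require Import structures.
From mathcomp Require Import all_boot all_order all_algebra all_field.
From mathcomp Require Import zify ring.
From Stdlib Require Import Classical.
Import Order.TTheory GRing.Theory Num.Theory.
Local Open Scope ring_scope.



Lemma coef_rpart (r : {poly int}) u j k :
  (rpart r u j)`_k = if (k %% u == j)%N then r`_k else 0.
Proof.
rewrite /rpart coef_poly; case: ltnP => // hk.
by case: ifP => // _; rewrite nth_default.
Qed.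

Lemma mod_cond (a x u : nat) : (0 < u)%N ->
  (a %% u == (u - x %% u) %% u)%N = ((a + x) %% u == 0)%N.
Proof.
move=> u0.
have h : (a + x %% u == u - x %% u + x %% u %[mod u]) = (a == u - x %% u %[mod u]).
  by rewrite eqn_modDr.
rewrite -h subnK; last by apply: ltnW; rewrite ltn_mod.
by rewrite modnn modnDmr.
Qed.




Lemma rpartM0 (G r : {poly int}) u : (0 < u)%N ->
  rpart (G * r) u 0 = \sum_(j < u) rpart G u ((u - j) %% u) * rpart r u j.
Proof.
move=> u0; apply/polyP => k.
rewrite coef_rpart coef_sum.
under eq_bigr => j _ do rewrite coefM.
rewrite exchange_big /= coefM.
have -> : (if (k %% u == 0)%N then \sum_(i < k.+1) G`_i * r`_(k - i) else 0)
   = \sum_(i < k.+1) (if (k %% u == 0)%N then G`_i * r`_(k - i) else 0).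
  by case: ifP => _ //; rewrite big1.
apply: eq_bigr => a _.
rewrite (bigD1 (Ordinal (ltn_pmod (k - a) u0))) //= big1 ?addr0; last first.
  move=> j /negbTE hj; rewrite !coef_rpart.
  have -> : ((k - a) %% u == j)%N = false.
    by apply/negbTE; apply: contraFN hj => /eqP hj'; apply/eqP/val_inj; rewrite /= hj'.
  by rewrite mulr0.
rewrite !coef_rpart eqxx mod_cond // subnKC //.
  by case: ifP; rewrite ?mul0r.
by rewrite -ltnS ltn_ord.
Qed.



Lemma ideal_of_mul (r G : {poly int}) u c : (0 < u)%N ->
  rpart (G * r) u 0 = c%:P -> in_part_ideal r u c.
Proof.
move=> u0 h; exists (fun j => rpart G u ((u - j) %% u)).
by rewrite -rpartM0.
Qed.

Lemma ideal_scale (r : {poly int}) u c m :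
  in_part_ideal r u c -> in_part_ideal r u (c * m).
Proof.
case=> q hq; exists (fun j => q j * m%:P).
under eq_bigr => j _ do rewrite mulrAC.
by rewrite -mulr_suml hq polyCM.
Qed.

Lemma comp_Xn1 n u : (0 < n)%N -> ~~ (u %| n)%N ->
  rpart ('X^n - 1) u 0 = (-1)%:P.
Proof.
move=> n0 hu; apply/polyP => k.
rewrite coef_rpart coefB coefXn coef1 coefC.
case: (k =P 0%N) => [-> | hk].
  by rewrite mod0n eqxx eq_sym (negbTE (lt0n_neq0 n0)) sub0r.
case: (k =P n) => [-> | hkn]; first by move: hu; rewrite /dvdn => /negbTE ->.
by rewrite subr0; case: ifP.
Qed.

Lemma comp_F q u m : prime q -> (q %| u)%N -> ~~ (q %| m)%N -> (0 < m)%N ->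
  rpart (\sum_(j < q) 'X^(j * m)) u 0 = 1.
Proof.
move=> pq qu qm m0; apply/polyP => k.
rewrite coef_rpart coef_sum coef1.
case: (k =P 0%N) => [-> | hk].
  rewrite mod0n eqxx.
  have q0 : (0 < q)%N by apply: prime_gt0.
  rewrite (bigD1 (Ordinal q0)) //= big1 ?addr0; first by rewrite coefXn mul0n.
  move=> j hj; rewrite coefXn; case: eqP => // /esym/eqP; rewrite muln_eq0.
  rewrite (negbTE (lt0n_neq0 m0)) orbF => /eqP j0.
  by move: hj; rewrite -val_eqE /= j0.
case: ifP => // hku; rewrite big1 //.
move=> j _; rewrite coefXn; case: eqP => // hkj.
have : (q %| j * m)%N by rewrite -hkj; apply: dvdn_trans qu _; exact: hku.
rewrite Euclid_dvdM // (negbTE qm) orbF => hqj.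
have j0 : val j = 0%N.
  by move: hqj; rewrite /dvdn modn_small ?ltn_ord // => /eqP.
by exfalso; apply: hk; rewrite hkj j0.
Qed.



Notation pC := (map_poly (intr : int -> algC)).

Lemma size_pC (p : {poly int}) : size (pC p) = size p.
Proof. by rewrite size_map_inj_poly //; apply: intr_inj. Qed.

Lemma geom0 (x : algC) u : x ^+ u = 1 -> x != 1 -> \sum_(i < u) x ^+ i = 0.
Proof.
move=> hx hx1; have := subrX1 x u; rewrite hx subrr => /esym/eqP.
by rewrite mulf_eq0 subr_eq0 (negbTE hx1) /= => /eqP.
Qed.

Lemma mod_back u j : (j < u)%N -> ((u - (u - j) %% u) %% u)%N = j.
Proof.
move=> ju; case: j ju => [|j] ju.
  by rewrite subn0 modnn subn0 modnn.
rewrite (modn_small (m := u - j.+1)); last by lia.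
rewrite subKn ?modn_small //; try lia.
Qed.

Lemma sum_pow u (w : algC) j i : u.-primitive_root w -> (j < u)%N ->
  \sum_(k < u) (w ^+ (i + (u - j))) ^+ k = if (i %% u == j)%N then u%:R else 0.
Proof.
move=> pw ju.
have u0 : (0 < u)%N := prim_order_gt0 pw.
have e : (i %% u == j)%N = ((i + (u - j)) %% u == 0)%N.
  by rewrite -mod_cond // mod_back.
have h1 : (w ^+ (i + (u - j)) == 1) = ((i + (u - j)) %% u == 0)%N.
  by rewrite -(expr0 w) (eq_prim_root_expr pw) mod0n.
rewrite e; case: ifP => hc.
  have /eqP -> : w ^+ (i + (u - j)) == 1 by rewrite h1.
  by under eq_bigr => k _ do rewrite expr1n; rewrite sumr_const card_ord.
apply: geom0; first by rewrite exprAC (prim_expr_order pw) expr1n.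
by rewrite h1 hc.
Qed.

Lemma fourier (r : {poly int}) u (w z : algC) j : u.-primitive_root w -> (j < u)%N ->
  u%:R * (pC (rpart r u j)).[z] =
  \sum_(k < u) w ^+ (k * (u - j)) * (pC r).[w ^+ k * z].
Proof.
move=> pw ju.
rewrite (horner_coef_wide (n := size r)); last by rewrite size_pC size_poly.
under [RHS]eq_bigr => k _ do rewrite (horner_coef_wide (n := size r)) ?size_pC // mulr_sumr.
rewrite exchange_big /= mulr_sumr; apply: eq_bigr => i _.
rewrite !coef_map /= coef_rpart.
transitivity ((r`_i)%:~R * z ^+ i * \sum_(k < u) (w ^+ (i + (u - j))) ^+ k).
  rewrite sum_pow //; case: ifP => _; last by rewrite mulr0 mul0r mulr0.
  by rewrite mulrC.
rewrite mulr_sumr; apply: eq_bigr => k _.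
rewrite exprMn -!exprM mulnDl mulnC exprD [(k * i)%N]mulnC.
rewrite [((u - j) * k)%N]mulnC; set A := w ^+ (i * k); set B := w ^+ (k * (u - j)).
ring.
Qed.

Lemma parts_vanish (r : {poly int}) u (w z : algC) : u.-primitive_root w ->
  (forall k, (k < u)%N -> (pC r).[w ^+ k * z] = 0) ->
  forall j, (j < u)%N -> (pC (rpart r u j)).[z] = 0.
Proof.
move=> pw hr j ju.
have := @fourier r u w z j pw ju; rewrite big1; last by move=> k _; rewrite hr // mulr0.
move/eqP; rewrite mulf_eq0 pnatr_eq0 => /orP[/eqP u0|/eqP //].
by move: (prim_order_gt0 pw); rewrite u0.
Qed.

Lemma zero_ideal (r : {poly int}) u (z : algC) m :
  (forall j, (j < u)%N -> (pC (rpart r u j)).[z] = 0) ->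
  in_part_ideal r u m -> m = 0.
Proof.
move=> hv [q hq].
have := congr1 (fun p => (pC p).[z]) hq => /=.
rewrite rmorph_sum horner_sum big1; last first.
  by move=> j _; rewrite rmorphM hornerM hv ?mulr0.
by rewrite map_polyC hornerC /= => /esym/eqP; rewrite intr_eq0 => /eqP.
Qed.



Lemma size_Psi n : size (Psi n) = n.
Proof.
elim: n => [|n IH]; first by rewrite /Psi big_ord0 size_poly0.
rewrite /Psi big_ord_recr /= -/(Psi n) addrC size_polyDl size_polyXn //.
by rewrite IH.
Qed.

Lemma geom0' (x : algC) n : x ^+ n = 1 -> x != 1 -> (pC (Psi n)).[x] = 0.
Proof.
move=> h1 h2; rewrite /Psi rmorph_sum horner_sum.
under eq_bigr => i _ do rewrite /= map_polyXn hornerXn.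
exact: geom0.
Qed.

Lemma Psi_zero n : composite n ->
  exists2 u, (1 < u)%N /\ (u <= size (Psi n))%N &
    forall m, in_part_ideal (Psi n) u m -> m = 0.
Proof.
case=> n1 np.
have n0 : (0 < n)%N by lia.
set a := pdiv n; set b := (n %/ a)%N.
have pa : prime a by apply: pdiv_prime.
have an : (a %| n)%N by apply: pdiv_dvd.
have nab : n = (b * a)%N by rewrite divnK.
have b1 : (1 < b)%N.
  case: b nab => [|[|b]] nab //; first by move: n0; rewrite nab.
  by move: np; rewrite nab mul1n pa.
exists a; first by split; [exact: prime_gt1 | rewrite size_Psi; exact: dvdn_leq].
have [z pz] := C_prim_root_exists n0.
have pw := dvdn_prim_root pz an.
move=> m; apply: (@zero_ideal _ _ z).
apply: (@parts_vanish (Psi n) a _ z pw) => k _.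
rewrite -exprM -exprSr.
apply: geom0'; first by rewrite exprAC (prim_expr_order pz) expr1n.
rewrite -(expr0 z) (eq_prim_root_expr pz) mod0n.
apply/negP => /eqP hd.
have : (b %| (n %/ a * k).+1)%N.
  apply: dvdn_trans (_ : (b %| n)%N) _; first by rewrite nab dvdn_mulr.
  by rewrite /dvdn hd.
rewrite -/b -addn1 dvdn_addr ?dvdn_mulr // dvdn1 => /eqP b1'.
by move: b1; rewrite b1'.
Qed.

Lemma Phi_zero n p : (0 < n)%N -> prime p -> (p ^ 2 %| n)%N ->
  exists2 u, (1 < u)%N /\ (u <= size 'Phi_n)%N &
    forall m, in_part_ideal 'Phi_n u m -> m = 0.
Proof.
move=> n0 pp hpn.
have pn : (p %| n)%N by apply: dvdn_trans hpn; rewrite dvdn_exp.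
set m := (n %/ p)%N.
have nmp : n = (m * p)%N by rewrite divnK.
have pm : (p %| m)%N.
  move: hpn; rewrite nmp expnS mulnC (expn1) dvdn_pmul2r //; exact: prime_gt0.
exists p.
  split; first exact: prime_gt1.
  rewrite size_Cyclotomic; apply: leqW.
  have [m' cpm' hn] := pfactor_coprime pp n0.
  have le2 : (2 <= logn p n)%N by rewrite -pfactor_dvdn.
  rewrite hn totient_coprime; last by rewrite coprimeXr // coprime_sym.
  rewrite totient_pfactor //; last by lia.
  have t0 : (0 < totient m')%N.
    by rewrite totient_gt0 lt0n; apply/eqP => m0; move: n0; rewrite hn m0 mul0n.
  have pe : (0 < p ^ (logn p n).-1)%N by rewrite expn_gt0 prime_gt0.
  have : (p <= p.-1 * p)%N.
    by rewrite -{1}(mul1n p) leq_mul2r; apply/orP; right; have := prime_gt1 pp; lia.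
  move=> h; apply: (leq_trans h).
  have pe' : (p <= p ^ (logn p n).-1)%N.
    by rewrite -{1}(expn1 p) leq_pexp2l ?prime_gt1 //; lia.
  move: t0 pe'; set e := (p ^ (logn p n).-1)%N; set t := totient m'.
  move=> t0 pe'; apply: (@leq_trans (p.-1 * e)); first by rewrite leq_mul2l pe' orbT.
  exact: leq_pmull.
have [z pz] := C_prim_root_exists n0.
have pw := dvdn_prim_root pz pn.
move=> k; apply: (@zero_ideal _ _ z).
apply: (@parts_vanish 'Phi_n p _ z pw) => j _.
rewrite -exprM -exprSr (Cintr_Cyclotomic pz).
apply/eqP; rewrite -/(root _ _) (root_cyclotomic pz) prim_root_exp_coprime //.
apply: (@coprime_dvdr _ (m * m)%N).
  have m0 : (0 < m)%N by move: n0; rewrite nmp muln_gt0 => /andP[].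
  by rewrite {1}nmp dvdn_pmul2l.
by rewrite coprimeMr andbb coprime_sym /coprime -addn1 -/m mulnC gcdnMDl gcdn1 eqxx.
Qed.

Lemma Phi_sqf_ideal n u : (0 < n)%N -> squarefree n -> (1 < u)%N ->
  in_part_ideal 'Phi_n u 1.
Proof.
move=> n0 sqf u1.
have u0 : (0 < u)%N by lia.
have nin : n \in divisors n by rewrite -dvdn_divisors.
case: (boolP (u %| n)%N) => hun; last first.
  suff h : in_part_ideal 'Phi_n u (-1) by move: (@ideal_scale 'Phi_n u (-1) (-1) h); rewrite mulrNN mulr1.

  apply: (@ideal_of_mul _ (\prod_(d <- rem n (divisors n)) 'Phi_d) _ _ u0).
  rewrite mulrC -(comp_Xn1 n u n0 hun) -prod_Cyclotomic // [in RHS](big_rem n) //.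
set q := pdiv u.
have pq : prime q by apply: pdiv_prime.
have qu : (q %| u)%N by apply: pdiv_dvd.
have qn : (q %| n)%N by exact: dvdn_trans qu hun.
set m := (n %/ q)%N.
have nmq : n = (m * q)%N by rewrite divnK.
have m0 : (0 < m)%N by move: n0; rewrite nmq muln_gt0 => /andP[].
have qm : ~~ (q %| m)%N.
  apply/negP => h; apply/negP: (sqf q pq).
  by rewrite nmq (expnS q 1) expn1 dvdn_mul.
have hF : ('X^m - 1) * (\sum_(j < q) 'X^(j * m)) = 'X^n - 1 :> {poly int}.
  rewrite [in RHS]nmq [in RHS]exprM [in RHS]subrX1; congr (_ * _).
  by apply: eq_bigr => j _; rewrite -exprM mulnC.
have hP : \prod_(d <- divisors n | (d %| m)%N) 'Phi_d = 'X^m - 1 :> {poly int}.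
  rewrite -prod_Cyclotomic // -big_filter; apply: perm_big.
  apply: uniq_perm; [by rewrite filter_uniq ?divisors_uniq | exact: divisors_uniq |].
  move=> d; rewrite mem_filter -!dvdn_divisors //.
  case hd: (d %| m)%N => //=; apply: dvdn_trans hd _.
  by rewrite nmq dvdn_mulr.
have nm : ~~ (n %| m)%N.
  apply/negP => h; have := dvdn_leq m0 h; rewrite {1}nmq.
  have := prime_gt1 pq; nia.
have hG : \sum_(j < q) 'X^(j * m) =
   \prod_(d <- rem n (divisors n) | ~~ (d %| m)%N) 'Phi_d * 'Phi_n :> {poly int}.
  have nz : ('X^m - 1 : {poly int}) != 0.
    by apply: monic_neq0; apply: monicXnsubC.
  apply: (mulfI nz); rewrite hF -prod_Cyclotomic // (bigID (fun d => d %| m)%N) /=.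
  rewrite hP; congr (_ * _).
  by rewrite (big_rem n) //= nm mulrC.
apply: (@ideal_of_mul _ (\prod_(d <- rem n (divisors n) | ~~ (d %| m)%N) 'Phi_d) _ _ u0).
by rewrite -hG (comp_F q u m pq qu qm m0).
Qed.



Lemma Psi_prime_ideal p u : prime p -> (1 < u)%N -> in_part_ideal (Psi p) u 1.
Proof.
move=> pp u1.
have u0 : (0 < u)%N by lia.
have p0 : (0 < p)%N by apply: prime_gt0.
case: (boolP (u %| p)%N) => hun; last first.
  suff h : in_part_ideal (Psi p) u (-1).
    by move: (@ideal_scale (Psi p) u (-1) (-1) h); rewrite mulrNN mulr1.
  apply: (@ideal_of_mul _ ('X - 1) _ _ u0).
  by rewrite /Psi -subrX1 (comp_Xn1 p u p0 hun).
have up : u = p.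
  by case/primeP: pp => _ /(_ u hun) /orP[/eqP u1'|/eqP //]; move: u1; rewrite u1'.
subst u.
apply: (@ideal_of_mul _ 1 _ _ u0).
have -> : 1 * Psi p = \sum_(j < p) 'X^(j * 1).
  by rewrite mul1r /Psi; apply: eq_bigr => j _; rewrite muln1.
apply: (comp_F p p 1 pp (dvdnn p)) => //.
by rewrite dvdn1; apply/eqP => h; move: (prime_gt1 pp); rewrite h.
Qed.

Lemma ideal0 (r : {poly int}) u : in_part_ideal r u 0.
Proof. by exists (fun _ => 0); rewrite big1 // => j _; rewrite mul0r. Qed.

Lemma Cong1 (r : {poly int}) :
  (forall u, (1 < u)%N -> in_part_ideal r u 1) -> is_Cong r 1.
Proof.
move=> h; split => // m; split => _; first exact: dvd1z.
by move=> u u1 _; move: (@ideal_scale r u 1 m (h u u1)); rewrite mul1r.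
Qed.

Lemma Cong0 (r : {poly int}) :
  (exists2 u, (1 < u)%N /\ (u <= size r)%N &
    forall m, in_part_ideal r u m -> m = 0) -> is_Cong r 0.
Proof.
case=> u [u1 us] hz; split => // m; rewrite dvd0z; split.
  by move=> h; apply/eqP; apply: hz; apply: h.
by move/eqP => -> v _ _; apply: ideal0.
Qed.

Theorem proposition4p10 (n : nat) (hn : (0 < n)%N) :
  (squarefree n -> is_Cong 'Phi_n 1) /\
  (~ squarefree n -> is_Cong 'Phi_n 0) /\
  (is_Cong (Psi n) 0 <-> composite n).
Proof.
split.
  by move=> sqf; apply: Cong1 => u u1; apply: Phi_sqf_ideal.
split.
  move=> nsqf; apply: Cong0.
  have [p [pp hp]] : exists p, prime p /\ (p ^ 2 %| n)%N.
    apply: NNPP => H; apply: nsqf => p pp; apply/negP => hd; apply: H.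
    by exists p.
  exact: Phi_zero hn pp hp.
split; last by move=> hc; apply: Cong0; apply: Psi_zero.
move=> [_ hC]; apply: NNPP => hnc.
have h1 : forall u, (1 < u)%N -> (u <= size (Psi n))%N -> in_part_ideal (Psi n) u 1.
  move=> u u1 us; case: (boolP (prime n)) => pn; first exact: Psi_prime_ideal.
  exfalso; move: us; rewrite size_Psi => us; apply: hnc; split => //; lia.
by move: (hC 1) => [/(_ h1)]; rewrite dvd0z.
Qed.
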